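(* Let $X$ be a marked Dynkin diagram with $d$ nodes whose generalized Cartan matrix is symmetrizable, and for $n\ge d$ let $X_n$ be the extended diagram described in the context. Then the sequence $\{\det(X_n): n\ge d\}$ is an arithmetic progression.
   Context: A marked Dynkin diagram $X$ is a Dynkin diagram with nodes numbered $1,\dots,d$, node $d$ being the distinguished node, with generalized Cartan matrix $C(X)$. For $n\ge d$, $X_n$ is the Dynkin diagram obtained by attaching a simply-laced chain of $n-d$ new nodes $d+1,d+2,\dots,n$ to node $d$; its generalized Cartan matrix $C(X_n)$ is the $n\times n$ matrix with $C(X)$ as its upper-left $d\times d$ block, diagonal entries $2$ for $i>d$, entries $C_{i,i+1}=C_{i+1,i}=-1$ for $d\le i<n$, and all other entries $0$. For a Dynkin diagram $Y$, $\det(Y)$ denotes the determinant of its generalized Cartan matrix. *)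

(* Defs.v *)
From mathcomp Require Import all_boot all_order all_algebra.
Set Implicit Arguments. Unset Strict Implicit. Unset Printing Implicit Defensive.
Import Order.TTheory GRing.Theory Num.Theory.
Local Open Scope ring_scope.

Definition is_gcm (d : nat) (C : 'M[int]_d) : Prop :=
  (forall i, C i i = 2) /\
  (forall i j, i != j -> C i j <= 0) /\
  (forall i j, C i j = 0 <-> C j i = 0).

(* Symmetrizable (Kac): C = D B with D an invertible diagonal matrix and
   B symmetric; i.e. there are nonzero d_i with C i j * d_j = C j i * d_i. *)
Definition symmetrizable (d : nat) (C : 'M[int]_d) : Prop :=
  exists dv : 'I_d -> rat, (forall i, dv i != 0) /\
    forall i j, (C i j)%:~R * dv j = (C j i)%:~R * dv i.

(* Entry of C at nat indices (0 outside the d x d block). *)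
Definition mxget (d : nat) (C : 'M[int]_d) (i j : nat) : int :=
  match @insub nat (fun k => k < d)%N _ i, @insub nat (fun k => k < d)%N _ j with
  | Some i', Some j' => C i' j'
  | _, _ => 0
  end.

(* Cartan matrix of X_n: C in the upper-left d x d block, a simply laced
   chain of new nodes d+1..n attached to node d (0-based: nodes d..n-1,
   attached to node d-1). *)
Definition ext_cartan (d : nat) (C : 'M[int]_d) (n : nat) : 'M[int]_n :=
  \matrix_(i < n, j < n)
    if (i < d)%N && (j < d)%N then mxget C i j
    else if i == j :> nat then 2
    else if (i.+1 == j :> nat) || (j.+1 == i :> nat) then -1
    else 0.

(* Main.v *)
Require Import Defs.
From mathcomp Require Import all_boot all_order all_algebra zify ring.
Import GRing.Theory.
Local Open Scope ring_scope.

Lemma sub_max d (C : 'M[int]_d) n :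
  row' ord_max (col' ord_max (ext_cartan C n.+1)) = ext_cartan C n.
Proof. by apply/matrixP=> i j; rewrite !mxE !lift_max. Qed.

Lemma subB d (C : 'M[int]_d) k : (d <= k.+1)%N ->
  \det (row' ord_max (col' (widen_ord (leqnSn k.+1) ord_max) (ext_cartan C k.+2)))
  = - \det (ext_cartan C k).
Proof.
move=> hd.
rewrite (expand_det_col _ ord_max) big_ord_recr /=.
rewrite big1; last first.
  move=> i _; rewrite !mxE /= /bump /=.
  have hi := ltn_ord i.
  have -> : (k < i)%N = false by lia.
  rewrite leqnn /= add0n add1n.
  have -> : (k.+1 < d)%N = false by lia.
  rewrite andbF.
  have -> : (i == k.+1 :> nat) = false by lia.
  have -> : (i.+1 == k.+1 :> nat) || (k.+2 == i :> nat) = false by lia.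
  by rewrite mul0r.
rewrite add0r /cofactor.
have -> : row' ord_max (col' ord_max (row' ord_max
    (col' (widen_ord (leqnSn k.+1) ord_max) (ext_cartan C k.+2)))) = ext_cartan C k.
  apply/matrixP=> i j; rewrite !mxE !lift_max /= /bump /=.
  have hi := ltn_ord i; have hj := ltn_ord j; rewrite /= in hi hj.
  have hkj : (k <= j)%N = false by rewrite leqNgt hj.
  rewrite hkj add0n hkj add0n.
  by rewrite ?add0n.
rewrite !mxE /= /bump /= leqnn ltnn /= add0n add1n.
have -> : (k < d)%N && (k.+1 < d)%N = false by lia.
have -> : (k == k.+1 :> nat) = false by lia.
rewrite eqxx /= -signr_odd addnn odd_double expr0 mul1r mulN1r.
by [].
Qed.

Lemma rec3 d (C : 'M[int]_d) k : (d <= k.+1)%N ->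
  \det (ext_cartan C k.+2) = 2 * \det (ext_cartan C k.+1) - \det (ext_cartan C k).
Proof.
move=> hd.
rewrite (expand_det_row _ ord_max) !big_ord_recr /=.
rewrite big1; last first.
  move=> j _; rewrite mxE /=.
  have hj := ltn_ord j.
  have -> : (k.+1 < d)%N = false by rewrite ltnNge hd.
  rewrite /=.
  have -> : (k.+1 == j :> nat) = false by apply/negbTE; rewrite neq_ltn; apply/orP; right; lia.
  have -> : (k.+2 == j :> nat) || (j.+1 == k.+1 :> nat) = false.
    apply/negbTE; rewrite negb_or !neq_ltn; apply/andP; split; apply/orP; [right|left]; lia.
  by rewrite mul0r.
rewrite add0r /cofactor subB // sub_max !mxE /=.
have -> : (k.+1 < d)%N = false by rewrite ltnNge hd.
rewrite /= eqxx.
have -> : (k.+1 == k :> nat) = false by lia.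
rewrite orbT.
have -> : ((-1) ^+ (k.+1 + k) : int) = -1 by rewrite -signr_odd addSn /= addnn odd_double.
have -> : ((-1) ^+ (k.+1 + k.+1) : int) = 1 by rewrite -signr_odd addnn odd_double.
by rewrite mul1r !mulN1r opprK addrC.
Qed.

Theorem lemma2p2 (d : nat) (C : 'M[int]_d) :
  (0 < d)%N -> is_gcm C -> symmetrizable C ->
  exists a b : int, forall n : nat, (d <= n)%N ->
    \det (ext_cartan C n) = a + b * n%:Z.
Proof.
move=> _ _ _.
set f := fun n => \det (ext_cartan C n).
set b := f d.+1 - f d.
have key : forall m, f (d + m)%N.+1 - f (d + m)%N = b /\ f (d + m)%N = f d + b * m%:Z.
  elim=> [|m [IH1 IH2]].
    by rewrite !addn0 mulr0 addr0; split.
  have hr : f (d + m)%N.+2 = 2 * f (d + m)%N.+1 - f (d + m)%N by apply: rec3; lia.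
  rewrite addnS; split.
    rewrite hr -IH1; clearbody f b; ring.
  rewrite -[f (d + m).+1](subrK (f (d + m)%N)) IH1 IH2 intS; clearbody f b; ring.
exists (f d - b * d%:Z), b => n hn.
have [_ h] := key (n - d)%N.
rewrite (subnKC hn) in h.
rewrite -/(f n) h.
rewrite -{2}(subnKC hn) PoszD; ring.
Qed.
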